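(* Every completely metrizable space that is almost arcwise connected and locally almost arcwise connected is arcwise connected and locally arcwise connected.
   Context: Two sets $A,B$ are joined by an arc in a set $S$ if there is a continuous $\gamma:[0,1]\to X$ with $\gamma([0,1])\subseteq S$, $\gamma(0)\in A$, $\gamma(1)\in B$. $X$ is almost arcwise connected if each pair of nonempty open subsets of $X$ can be joined by an arc in $X$. $X$ is locally almost arcwise connected at $x$ if for every neighborhood $V$ of $x$ there is a neighborhood $U\subseteq V$ of $x$ such that each pair of nonempty open subsets of $U$ can be joined by an arc in $\overline V$; locally almost arcwise connected means this holds at every point. *)

(* Defs.v *)
From Stdlib Require Import Reals.
Open Scope R_scope.

Definition is_metric {X : Type} (d : X -> X -> R) : Prop :=
  (forall x y, 0 <= d x y) /\
  (forall x y, d x y = 0 <-> x = y) /\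
  (forall x y, d x y = d y x) /\
  (forall x y z, d x z <= d x y + d y z).

Definition cauchy_seq {X : Type} (d : X -> X -> R) (u : nat -> X) : Prop :=
  forall eps, 0 < eps -> exists N, forall m n, (N <= m)%nat -> (N <= n)%nat ->
    d (u m) (u n) < eps.

Definition converges_to {X : Type} (d : X -> X -> R) (u : nat -> X) (l : X) : Prop :=
  forall eps, 0 < eps -> exists N, forall n, (N <= n)%nat -> d (u n) l < eps.

Definition complete_metric {X : Type} (d : X -> X -> R) : Prop :=
  forall u, cauchy_seq d u -> exists l, converges_to d u l.

Definition is_open {X : Type} (d : X -> X -> R) (U : X -> Prop) : Prop :=
  forall x, U x -> exists eps, 0 < eps /\ forall y, d x y < eps -> U y.

Definition nonempty {X : Type} (A : X -> Prop) : Prop := exists x, A x.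

Definition subset {X : Type} (A B : X -> Prop) : Prop := forall x, A x -> B x.

Definition is_nbhd {X : Type} (d : X -> X -> R) (x : X) (V : X -> Prop) : Prop :=
  exists W, is_open d W /\ W x /\ subset W V.

Definition closure {X : Type} (d : X -> X -> R) (V : X -> Prop) : X -> Prop :=
  fun x => forall eps, 0 < eps -> exists y, V y /\ d x y < eps.

(* gamma : [0,1] -> X continuous (gamma given on R, only its restriction to [0,1] matters) *)
Definition continuous_on_01 {X : Type} (d : X -> X -> R) (g : R -> X) : Prop :=
  forall t, 0 <= t <= 1 -> forall eps, 0 < eps -> exists delta, 0 < delta /\
    forall s, 0 <= s <= 1 -> Rabs (s - t) < delta -> d (g s) (g t) < eps.

Definition joined_in {X : Type} (d : X -> X -> R) (A B S : X -> Prop) : Prop :=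
  exists g : R -> X, continuous_on_01 d g /\
    (forall t, 0 <= t <= 1 -> S (g t)) /\ A (g 0) /\ B (g 1).

Definition whole {X : Type} : X -> Prop := fun _ => True.

Definition almost_arcwise_connected {X : Type} (d : X -> X -> R) : Prop :=
  forall U W, is_open d U -> nonempty U -> is_open d W -> nonempty W ->
    joined_in d U W whole.

Definition loc_almost_arcwise_connected_at {X : Type} (d : X -> X -> R) (x : X) : Prop :=
  forall V, is_nbhd d x V -> exists U, is_nbhd d x U /\ subset U V /\
    forall A B, is_open d A -> nonempty A -> subset A U ->
                is_open d B -> nonempty B -> subset B U ->
      joined_in d A B (closure d V).

Definition loc_almost_arcwise_connected {X : Type} (d : X -> X -> R) : Prop :=
  forall x, loc_almost_arcwise_connected_at d x.

Definition arcwise_connected {X : Type} (d : X -> X -> R) : Prop :=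
  forall a b : X, joined_in d (eq a) (eq b) whole.

Definition loc_arcwise_connected {X : Type} (d : X -> X -> R) : Prop :=
  forall x, forall V, is_nbhd d x V -> exists U, is_nbhd d x U /\ subset U V /\
    forall a b, U a -> U b -> joined_in d (eq a) (eq b) V.

(* Main.v *)
Require Import Defs.
From Stdlib Require Import Reals Lra Lia Classical ClassicalEpsilon.
Open Scope R_scope.

Lemma d_nonneg {X} (d : X -> X -> R) (Hm : is_metric d) x y : 0 <= d x y.
Proof. destruct Hm as [H _]; apply H. Qed.
Lemma d_refl {X} (d : X -> X -> R) (Hm : is_metric d) x : d x x = 0.
Proof. destruct Hm as [_ [H _]]; apply H; reflexivity. Qed.
Lemma d_eq {X} (d : X -> X -> R) (Hm : is_metric d) x y : d x y = 0 -> x = y.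
Proof. destruct Hm as [_ [H _]]; apply H. Qed.
Lemma d_sym {X} (d : X -> X -> R) (Hm : is_metric d) x y : d x y = d y x.
Proof. destruct Hm as [_ [_ [H _]]]; apply H. Qed.
Lemma d_tri {X} (d : X -> X -> R) (Hm : is_metric d) x y z : d x z <= d x y + d y z.
Proof. destruct Hm as [_ [_ [_ H]]]; apply H. Qed.

Lemma abs_lt a b : Rabs a < b -> -b < a < b.
Proof. intro H. destruct (Rabs_def2 _ _ H). lra. Qed.
Lemma lt_abs a b : -b < a < b -> Rabs a < b.
Proof. intros [H1 H2]. apply Rabs_def1; lra. Qed.

Definition concat {X} (f g : R -> X) (t : R) : X :=
  if Rle_dec t (1/2) then f (2*t) else g (2*t-1).

Lemma concat_cont {X} (d : X -> X -> R) f g : continuous_on_01 d f -> continuous_on_01 d g -> f 1 = g 0 ->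
  continuous_on_01 d (concat f g).
Proof.
  intros Hf Hg E t Ht eps He.
  unfold concat.
  destruct (total_order_T t (1/2)) as [[Hlt|Heq]|Hgt].
  - destruct (Hf (2*t) ltac:(lra) eps He) as [dl [Hdl Hf']].
    exists (Rmin (dl/2) (1/2 - t)). split. { apply Rmin_pos; lra. }
    intros s Hs Hst. apply abs_lt in Hst.
    assert (Hm1 := Rmin_l (dl/2) (1/2-t)). assert (Hm2 := Rmin_r (dl/2) (1/2-t)).
    destruct (Rle_dec s (1/2)); [|lra]. destruct (Rle_dec t (1/2)); [|lra].
    apply Hf'. lra. apply lt_abs. lra.
  - subst t. destruct (Hf 1 ltac:(lra) eps He) as [dl [Hdl Hf']].
    destruct (Hg 0 ltac:(lra) eps He) as [dg [Hdg Hg']].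
    exists (Rmin (dl/2) (Rmin (dg/2) (1/2))). split. { repeat apply Rmin_pos; lra. }
    intros s Hs Hst. apply abs_lt in Hst.
    assert (Hm1 := Rmin_l (dl/2) (Rmin (dg/2) (1/2))). assert (Hm2 := Rmin_r (dl/2) (Rmin (dg/2) (1/2))).
    assert (Hm3 := Rmin_l (dg/2) (1/2)). assert (Hm4 := Rmin_r (dg/2) (1/2)).
    destruct (Rle_dec (1/2) (1/2)); [|lra].
    replace (2*(1/2)) with 1 by lra.
    destruct (Rle_dec s (1/2)).
    + apply Hf'. lra. apply lt_abs; lra.
    + rewrite E. apply Hg'. lra. apply lt_abs; lra.
  - destruct (Hg (2*t-1) ltac:(lra) eps He) as [dg [Hdg Hg']].
    exists (Rmin (dg/2) (t - 1/2)). split. { apply Rmin_pos; lra. }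
    intros s Hs Hst. apply abs_lt in Hst.
    assert (Hm1 := Rmin_l (dg/2) (t-1/2)). assert (Hm2 := Rmin_r (dg/2) (t-1/2)).
    destruct (Rle_dec s (1/2)); [lra|]. destruct (Rle_dec t (1/2)); [lra|].
    apply Hg'. lra. apply lt_abs. lra.
Qed.

Lemma concat_img {X} (f g : R -> X) (S : X -> Prop) :
  (forall t, 0 <= t <= 1 -> S (f t)) -> (forall t, 0 <= t <= 1 -> S (g t)) ->
  forall t, 0 <= t <= 1 -> S (concat f g t).
Proof.
  intros Hf Hg t Ht. unfold concat. destruct (Rle_dec t (1/2)).
  apply Hf; lra. apply Hg; lra.
Qed.

Lemma concat_0 {X} (f g : R -> X) : concat f g 0 = f 0.
Proof. unfold concat. destruct (Rle_dec 0 (1/2)); [|lra]. f_equal; lra. Qed.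
Lemma concat_1 {X} (f g : R -> X) : concat f g 1 = g 1.
Proof. unfold concat. destruct (Rle_dec 1 (1/2)); [lra|]. f_equal; lra. Qed.

Definition rev {X} (g : R -> X) (t : R) : X := g (1 - t).
Lemma rev_cont {X} (d : X -> X -> R) g : continuous_on_01 d g -> continuous_on_01 d (rev g).
Proof.
  intros Hg t Ht eps He. destruct (Hg (1-t) ltac:(lra) eps He) as [dl [Hdl H]].
  exists dl. split; auto. intros s Hs Hst. apply abs_lt in Hst. unfold rev.
  apply H. lra. apply lt_abs; lra.
Qed.

Definition ball {X} (d : X -> X -> R) x r := fun y => d x y < r.
Lemma ball_open {X} (d : X -> X -> R) (Hm : is_metric d) x r : is_open d (ball d x r).
Proof.
  intros y Hy. unfold ball in *. exists (r - d x y). split. lra.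
  intros z Hz. pose proof (d_tri d Hm x y z). lra.
Qed.

Fixpoint J {X} (step : nat -> X -> X -> R -> X) (n k : nat) (x y : X) (t : R) {struct n} : X :=
  match n with
  | O => x
  | S n' => if Rle_dec t (1/3) then J step n' (S k) x (step k x y 0) (3*t)
            else if Rle_dec t (2/3) then step k x y (3*t-1)
            else J step n' (S k) (step k x y 1) y (3*t-2)
  end.

Lemma J_S {X} (step : nat -> X -> X -> R -> X) n k x y t :
  J step (S n) k x y t = if Rle_dec t (1/3) then J step n (S k) x (step k x y 0) (3*t)
            else if Rle_dec t (2/3) then step k x y (3*t-1)
            else J step n (S k) (step k x y 1) y (3*t-2).
Proof. reflexivity. Qed.

Lemma J_0 {X} (step : nat -> X -> X -> R -> X) n : forall k x y, J step n k x y 0 = x.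
Proof.
  induction n; intros. reflexivity. rewrite J_S. destruct (Rle_dec 0 (1/3)); [|lra].
  rewrite Rmult_0_r. apply IHn.
Qed.

Definition step_spec {X} (d : X -> X -> R) (e : nat -> R) (valid : nat -> X -> X -> Prop)
  (step : nat -> X -> X -> R -> X) :=
  forall k x y, valid k x y ->
  continuous_on_01 d (step k x y) /\ valid (S k) x (step k x y 0) /\
  valid (S k) (step k x y 1) y /\ (forall t, 0 <= t <= 1 -> d x (step k x y t) < 2 * e k).

Lemma J_1 {X} (d : X -> X -> R) e valid step
  (valid_d : forall k x y, valid k x y -> d x y < e k)
  (Hs : step_spec d e valid step) n :
  forall k x y, valid k x y -> d (J step n k x y 1) y < e (k+n)%nat.
Proof.
  induction n; intros k x y Hv.
  - simpl. rewrite Nat.add_0_r. apply valid_d; auto.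
  - rewrite J_S. destruct (Rle_dec 1 (1/3)); [lra|]. destruct (Rle_dec 1 (2/3)); [lra|].
    replace (3*1-2) with 1 by lra. replace (k + S n)%nat with (S k + n)%nat by lia.
    apply IHn. apply Hs; auto.
Qed.

Lemma J_step {X} (d : X -> X -> R) (Hm : is_metric d) e (e_pos : forall k, 0 < e k) valid step
  (Hs : step_spec d e valid step) n :
  forall k x y t, valid k x y -> 0 <= t <= 1 ->
  d (J step (S n) k x y t) (J step n k x y t) <= 2 * e (k+n)%nat.
Proof.
  induction n; intros k x y t Hv Ht; destruct (Hs k x y Hv) as [Hc [Hv1 [Hv2 Hb]]].
  - rewrite J_S. rewrite Nat.add_0_r. cbn [J].
    destruct (Rle_dec t (1/3)).
    + rewrite (d_refl d Hm). pose proof (e_pos k). lra.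
    + destruct (Rle_dec t (2/3)).
      * rewrite (d_sym d Hm). left. apply Hb. lra.
      * rewrite (d_sym d Hm). left. apply Hb. lra.
  - rewrite (J_S step (S n) k x y t). rewrite (J_S step n k x y t).
    replace (k + S n)%nat with (S k + n)%nat by lia.
    destruct (Rle_dec t (1/3)).
    + apply IHn; auto. lra.
    + destruct (Rle_dec t (2/3)).
      * rewrite (d_refl d Hm). pose proof (e_pos (S k + n)%nat). lra.
      * apply IHn; auto. lra.
Qed.

Lemma J_tail {X} (d : X -> X -> R) (Hm : is_metric d) e (e_pos : forall k, 0 < e k)
  (e_S : forall k, e (S k) = e k / 2) valid step
  (Hs : step_spec d e valid step) k x y t (Hv : valid k x y) (Ht : 0 <= t <= 1) j :
  forall n, d (J step (n+j) k x y t) (J step n k x y t) <= 4 * e (k+n)%nat - 4 * e (k+n+j)%nat.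
Proof.
  induction j; intros n.
  - rewrite !Nat.add_0_r. rewrite (d_refl d Hm). lra.
  - pose proof (d_tri d Hm (J step (n + S j) k x y t) (J step (n + j) k x y t) (J step n k x y t)).
    pose proof (IHj n).
    replace (n + S j)%nat with (S (n + j)) in * by lia.
    pose proof (J_step d Hm e e_pos valid step Hs (n+j) k x y t Hv Ht).
    replace (k + n + S j)%nat with (S (k + (n + j))) by lia.
    rewrite e_S. replace (k + n + j)%nat with (k + (n+j))%nat in * by lia. lra.
Qed.

Lemma J_cont {X} (d : X -> X -> R) (Hm : is_metric d) e (e_pos : forall k, 0 < e k) valid step
  (valid_d : forall k x y, valid k x y -> d x y < e k)
  (Hs : step_spec d e valid step) n :
  forall k x y, valid k x y -> forall t, 0 <= t <= 1 -> forall eta, 0 < eta ->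
  exists del, 0 < del /\ forall s, 0 <= s <= 1 -> Rabs (s - t) < del ->
    d (J step n k x y s) (J step n k x y t) < eta + 2 * e (k+n)%nat.
Proof.
  induction n; intros k x y Hv t Ht eta Heta.
  - exists 1. split. lra. intros. cbn [J]. rewrite (d_refl d Hm). pose proof (e_pos (k+0)%nat). lra.
  - destruct (Hs k x y Hv) as [Hc [Hv1 [Hv2 Hb]]].
    set (g := step k x y) in *.
    replace (k + S n)%nat with (S k + n)%nat by lia.
    pose proof (e_pos (S k + n)%nat) as Hep.
    destruct (total_order_T t (1/3)) as [[Hlt|Heq]|Hgt].
    + destruct (IHn (S k) x (g 0) Hv1 (3*t) ltac:(lra) eta Heta) as [dL [HdL HL]].
      exists (Rmin (dL/3) (1/3 - t)). split. { apply Rmin_pos; lra. }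
      intros s Hs' Hst. apply abs_lt in Hst.
      assert (Hm1 := Rmin_l (dL/3) (1/3-t)). assert (Hm2 := Rmin_r (dL/3) (1/3-t)).
      rewrite !J_S. fold g.
      destruct (Rle_dec s (1/3)); [|lra]. destruct (Rle_dec t (1/3)); [|lra].
      apply HL. lra. apply lt_abs; lra.
    + subst t.
      destruct (IHn (S k) x (g 0) Hv1 1 ltac:(lra) (eta/2) ltac:(lra)) as [dL [HdL HL]].
      destruct (Hc 0 ltac:(lra) (eta/2) ltac:(lra)) as [dg [Hdg Hg]].
      pose proof (J_1 d e valid step valid_d Hs n (S k) x (g 0) Hv1) as HJ1.
      exists (Rmin (dL/3) (Rmin (dg/3) (1/3))). split. { repeat apply Rmin_pos; lra. }
      intros s Hs' Hst. apply abs_lt in Hst.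
      assert (Hm1 := Rmin_l (dL/3) (Rmin (dg/3) (1/3))). assert (Hm2 := Rmin_r (dL/3) (Rmin (dg/3) (1/3))).
      assert (Hm3 := Rmin_l (dg/3) (1/3)). assert (Hm4 := Rmin_r (dg/3) (1/3)).
      rewrite !J_S. fold g.
      destruct (Rle_dec (1/3) (1/3)); [|lra].
      replace (3 * (1/3)) with 1 by lra.
      destruct (Rle_dec s (1/3)).
      * assert (H := HL (3*s) ltac:(lra) ltac:(apply lt_abs; lra)). lra.
      * destruct (Rle_dec s (2/3)); [|lra].
        assert (H := Hg (3*s-1) ltac:(lra) ltac:(apply lt_abs; lra)).
        pose proof (d_tri d Hm (g (3*s-1)) (g 0) (J step n (S k) x (g 0) 1)).
        rewrite (d_sym d Hm (g 0)) in H0. lra.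
    + destruct (total_order_T t (2/3)) as [[Hlt2|Heq2]|Hgt2].
      * destruct (Hc (3*t-1) ltac:(lra) eta Heta) as [dg [Hdg Hg]].
        exists (Rmin (dg/3) (Rmin (t-1/3) (2/3-t))). split. { repeat apply Rmin_pos; lra. }
        intros s Hs' Hst. apply abs_lt in Hst.
        assert (Hm1 := Rmin_l (dg/3) (Rmin (t-1/3) (2/3-t))). assert (Hm2 := Rmin_r (dg/3) (Rmin (t-1/3) (2/3-t))).
        assert (Hm3 := Rmin_l (t-1/3) (2/3-t)). assert (Hm4 := Rmin_r (t-1/3) (2/3-t)).
        rewrite !J_S. fold g.
        destruct (Rle_dec s (1/3)); [lra|]. destruct (Rle_dec t (1/3)); [lra|].
        destruct (Rle_dec s (2/3)); [|lra]. destruct (Rle_dec t (2/3)); [|lra].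
        assert (H := Hg (3*s-1) ltac:(lra) ltac:(apply lt_abs; lra)). lra.
      * subst t.
        destruct (IHn (S k) (g 1) y Hv2 0 ltac:(lra) (eta/2) ltac:(lra)) as [dR [HdR HR]].
        destruct (Hc 1 ltac:(lra) (eta/2) ltac:(lra)) as [dg [Hdg Hg]].
        exists (Rmin (dR/3) (Rmin (dg/3) (1/3))). split. { repeat apply Rmin_pos; lra. }
        intros s Hs' Hst. apply abs_lt in Hst.
        assert (Hm1 := Rmin_l (dR/3) (Rmin (dg/3) (1/3))). assert (Hm2 := Rmin_r (dR/3) (Rmin (dg/3) (1/3))).
        assert (Hm3 := Rmin_l (dg/3) (1/3)). assert (Hm4 := Rmin_r (dg/3) (1/3)).
        rewrite !J_S. fold g.
        destruct (Rle_dec (2/3) (1/3)); [lra|]. destruct (Rle_dec (2/3) (2/3)); [|lra].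
        replace (3 * (2/3) - 1) with 1 by lra.
        destruct (Rle_dec s (1/3)); [lra|].
        destruct (Rle_dec s (2/3)).
        -- assert (H := Hg (3*s-1) ltac:(lra) ltac:(apply lt_abs; lra)). lra.
        -- assert (H := HR (3*s-2) ltac:(lra) ltac:(apply lt_abs; lra)).
           rewrite (J_0 step) in H. lra.
      * destruct (IHn (S k) (g 1) y Hv2 (3*t-2) ltac:(lra) eta Heta) as [dR [HdR HR]].
        exists (Rmin (dR/3) (t - 2/3)). split. { apply Rmin_pos; lra. }
        intros s Hs' Hst. apply abs_lt in Hst.
        assert (Hm1 := Rmin_l (dR/3) (t-2/3)). assert (Hm2 := Rmin_r (dR/3) (t-2/3)).
        rewrite !J_S. fold g.
        destruct (Rle_dec s (1/3)); [lra|]. destruct (Rle_dec t (1/3)); [lra|].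
        destruct (Rle_dec s (2/3)); [lra|]. destruct (Rle_dec t (2/3)); [lra|].
        apply HR. lra. apply lt_abs; lra.
Qed.

Lemma small_zero a : 0 <= a -> (forall c, 0 < c -> a <= c) -> a = 0.
Proof. intros H1 H2. destruct (Rle_lt_or_eq_dec 0 a H1); auto. specialize (H2 (a/2)). lra. Qed.

Lemma limit_path {X} (d : X -> X -> R) (Hm : is_metric d) (Hcomp : complete_metric d)
  e (e_pos : forall k, 0 < e k) (e_S : forall k, e (S k) = e k / 2)
  (e_small : forall c, 0 < c -> exists N, e N < c)
  valid step (valid_d : forall k x y, valid k x y -> d x y < e k)
  (Hs : step_spec d e valid step) p q (Hv : valid 0%nat p q) :
  exists g, continuous_on_01 d g /\ g 0 = p /\ g 1 = q /\
    forall t, 0 <= t <= 1 -> d p (g t) <= 4 * e 0%nat.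
Proof.
  assert (Htail : forall t, 0 <= t <= 1 -> forall m n, (n <= m)%nat ->
     d (J step m 0 p q t) (J step n 0 p q t) <= 4 * e n).
  { intros t Ht m n Hmn. replace m with (n + (m - n))%nat by lia.
    pose proof (J_tail d Hm e e_pos e_S valid step Hs 0 p q t Hv Ht (m-n) n).
    pose proof (e_pos (0 + n + (m - n))%nat). simpl in *. lra. }
  assert (Hex : forall t, exists l, 0 <= t <= 1 -> forall n, d l (J step n 0 p q t) <= 4 * e n).
  { intro t. destruct (classic (0 <= t <= 1)) as [Ht|Ht]; [|exists p; tauto].
    destruct (Hcomp (fun n => J step n 0 p q t)) as [l Hl].
    - intros c Hc. destruct (e_small (c/8) ltac:(lra)) as [N HN]. exists N.
      intros m n Hm' Hn'.
      pose proof (Htail t Ht m N Hm'). pose proof (Htail t Ht n N Hn').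
      pose proof (d_tri d Hm (J step m 0 p q t) (J step N 0 p q t) (J step n 0 p q t)).
      rewrite (d_sym d Hm (J step N 0 p q t)) in H1. lra.
    - exists l. intros _ n. apply Rle_plus_epsilon. intros c Hc.
      destruct (Hl c Hc) as [N HN].
      pose proof (HN (Nat.max N n) ltac:(lia)).
      pose proof (Htail t Ht (Nat.max N n) n ltac:(lia)).
      pose proof (d_tri d Hm l (J step (Nat.max N n) 0 p q t) (J step n 0 p q t)).
      rewrite (d_sym d Hm l (J step (Nat.max N n) 0 p q t)) in H1. lra. }
  set (G := fun t => proj1_sig (constructive_indefinite_description _ (Hex t))).
  assert (HG : forall t, 0 <= t <= 1 -> forall n, d (G t) (J step n 0 p q t) <= 4 * e n).
  { intro t. unfold G. exact (proj2_sig (constructive_indefinite_description _ (Hex t))). }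
  exists G. split; [|split; [|split]].
  - intros t Ht eta Heta.
    destruct (e_small (eta/20) ltac:(lra)) as [N HN].
    destruct (J_cont d Hm e e_pos valid step valid_d Hs N 0 p q Hv t Ht (eta/2) ltac:(lra))
      as [del [Hdel H]].
    exists del. split; auto. intros s Hs' Hst.
    pose proof (H s Hs' Hst). simpl in H0.
    pose proof (HG s Hs' N). pose proof (HG t Ht N).
    pose proof (d_tri d Hm (G s) (J step N 0 p q s) (G t)).
    pose proof (d_tri d Hm (J step N 0 p q s) (J step N 0 p q t) (G t)).
    rewrite (d_sym d Hm (J step N 0 p q t) (G t)) in H4. pose proof (e_pos N). lra.
  - apply (d_eq d Hm). apply small_zero. apply (d_nonneg d Hm).
    intros c Hc. destruct (e_small (c/4) ltac:(lra)) as [N HN].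
    pose proof (HG 0 ltac:(lra) N). rewrite J_0 in H. lra.
  - apply (d_eq d Hm). apply small_zero. apply (d_nonneg d Hm).
    intros c Hc. destruct (e_small (c/5) ltac:(lra)) as [N HN].
    pose proof (HG 1 ltac:(lra) N).
    pose proof (J_1 d e valid step valid_d Hs N 0 p q Hv). simpl in H0.
    pose proof (d_tri d Hm (G 1) (J step N 0 p q 1) q). lra.
  - intros t Ht. pose proof (HG t Ht 0%nat). cbn [J] in H. rewrite (d_sym d Hm). exact H.
Qed.

Definition jprop {X} (d : X -> X -> R) x rho r :=
  forall A B, is_open d A -> nonempty A -> subset A (ball d x rho) ->
    is_open d B -> nonempty B -> subset B (ball d x rho) -> joined_in d A B (ball d x r).

Lemma joined_mono {X} (d : X -> X -> R) A B S S' : subset S S' -> joined_in d A B S -> joined_in d A B S'.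
Proof. intros H [g [H1 [H2 [H3 H4]]]]. exists g. repeat split; auto. Qed.

Lemma delta_ex {X} (d : X -> X -> R) (Hm : is_metric d) (Hl : loc_almost_arcwise_connected d) x r :
  exists rho, 0 < r -> 0 < rho /\ rho <= r /\ jprop d x rho r.
Proof.
  destruct (classic (0 < r)) as [Hr|Hr]; [|exists 0; tauto].
  destruct (Hl x (ball d x (r/2))) as [U [[W [HWo [HWx HWU]]] [HUV Hj]]].
  { exists (ball d x (r/2)). split. apply ball_open; auto. split. unfold ball. rewrite (d_refl d Hm). lra.
    intros z Hz; exact Hz. }
  destruct (HWo x HWx) as [eps [Heps Hb]].
  exists (Rmin eps r). intros _.
  split. apply Rmin_pos; auto. split. apply Rmin_r.
  intros A B HA HAn HAs HB HBn HBs.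
  assert (Hsub : forall C, subset C (ball d x (Rmin eps r)) -> subset C U).
  { intros C HC z Hz. apply HWU. apply Hb. specialize (HC z Hz). unfold ball in HC.
    pose proof (Rmin_l eps r). lra. }
  apply (joined_mono d A B (closure d (ball d x (r/2)))).
  - intros z Hz. destruct (Hz (r/2) ltac:(lra)) as [y [Hy1 Hy2]]. unfold ball in *.
    pose proof (d_tri d Hm x y z). rewrite (d_sym d Hm y z) in H. lra.
  - apply Hj; auto.
Qed.

Definition dspec {X} (d : X -> X -> R) (delta : X -> R -> R) :=
  forall x r, 0 < r -> 0 < delta x r /\ delta x r <= r /\ jprop d x (delta x r) r.

Lemma step_core {X} (d : X -> X -> R) (Hm : is_metric d) delta (Hd : dspec d delta) r r' c x y rho
  (Hr : 0 < r) (Hr' : 0 < r') (Hx : d c x < rho) (Hy : d c y < rho) (Hj : jprop d c rho r) :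
  exists g, continuous_on_01 d g /\ d x (g 0) < delta x r' /\ d y (g 1) < delta y r' /\
    forall t, 0 <= t <= 1 -> d c (g t) < r.
Proof.
  destruct (Hd x r' Hr') as [Hdx _]. destruct (Hd y r' Hr') as [Hdy _].
  set (s := Rmin (Rmin (rho - d c x) (rho - d c y)) (Rmin (delta x r') (delta y r'))).
  assert (Hs1 : s <= rho - d c x) by (unfold s; pose proof (Rmin_l (Rmin (rho - d c x) (rho - d c y)) (Rmin (delta x r') (delta y r'))); pose proof (Rmin_l (rho - d c x) (rho - d c y)); lra).
  assert (Hs2 : s <= rho - d c y) by (unfold s; pose proof (Rmin_l (Rmin (rho - d c x) (rho - d c y)) (Rmin (delta x r') (delta y r'))); pose proof (Rmin_r (rho - d c x) (rho - d c y)); lra).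
  assert (Hs3 : s <= delta x r') by (unfold s; pose proof (Rmin_r (Rmin (rho - d c x) (rho - d c y)) (Rmin (delta x r') (delta y r'))); pose proof (Rmin_l (delta x r') (delta y r')); lra).
  assert (Hs4 : s <= delta y r') by (unfold s; pose proof (Rmin_r (Rmin (rho - d c x) (rho - d c y)) (Rmin (delta x r') (delta y r'))); pose proof (Rmin_r (delta x r') (delta y r')); lra).
  assert (Hs0 : 0 < s) by (unfold s; repeat apply Rmin_pos; lra).
  destruct (Hj (ball d x s) (ball d y s)) as [g [Hg1 [Hg2 [Hg3 Hg4]]]].
  - apply ball_open; auto.
  - exists x. unfold ball. rewrite (d_refl d Hm). auto.
  - intros z Hz. unfold ball in *. pose proof (d_tri d Hm c x z). lra.
  - apply ball_open; auto.
  - exists y. unfold ball. rewrite (d_refl d Hm). auto.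
  - intros z Hz. unfold ball in *. pose proof (d_tri d Hm c y z). lra.
  - exists g. unfold ball in *. repeat split; auto; lra.
Qed.

Definition valid_of {X} (d : X -> X -> R) (delta : X -> R -> R) (e : nat -> R) k x y :=
  d x y < delta x (e k) \/ d x y < delta y (e k).

Lemma step_ex {X} (d : X -> X -> R) (Hm : is_metric d) delta (Hd : dspec d delta) e
  (e_pos : forall k, 0 < e k) k x y :
  exists g : R -> X, valid_of d delta e k x y ->
  continuous_on_01 d g /\ valid_of d delta e (S k) x (g 0) /\
  valid_of d delta e (S k) (g 1) y /\ (forall t, 0 <= t <= 1 -> d x (g t) < 2 * e k).
Proof.
  destruct (classic (valid_of d delta e k x y)) as [Hv|Hv]; [|exists (fun _ => x); tauto].
  pose proof (e_pos k) as Hk. pose proof (e_pos (S k)) as HSk.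
  assert (Hxy : d x y = d y x) by apply (d_sym d Hm).
  destruct Hv as [Hv|Hv].
  - destruct (Hd x (e k) Hk) as [H1 [H2 H3]].
    destruct (step_core d Hm delta Hd (e k) (e (S k)) x x y (delta x (e k)) Hk HSk)
      as [g [Hg1 [Hg2 [Hg3 Hg4]]]]; auto.
    { rewrite (d_refl d Hm); auto. }
    exists g. intros _. split; auto. split. left; auto. split. right. rewrite (d_sym d Hm); auto.
    intros t Ht. specialize (Hg4 t Ht). lra.
  - destruct (Hd y (e k) Hk) as [H1 [H2 H3]].
    destruct (step_core d Hm delta Hd (e k) (e (S k)) y x y (delta y (e k)) Hk HSk)
      as [g [Hg1 [Hg2 [Hg3 Hg4]]]]; auto.
    { lra. }
    { rewrite (d_refl d Hm); auto. }
    exists g. intros _. split; auto. split. left; auto. split. right. rewrite (d_sym d Hm); auto.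
    intros t Ht. specialize (Hg4 t Ht). pose proof (d_tri d Hm x y (g t)). lra.
Qed.

Lemma LPC {X} (d : X -> X -> R) (Hm : is_metric d) (Hcomp : complete_metric d)
  (Hl : loc_almost_arcwise_connected d) p r (Hr : 0 < r) :
  exists eta, 0 < eta /\ forall q, d p q < eta -> exists g, continuous_on_01 d g /\
    g 0 = p /\ g 1 = q /\ forall t, 0 <= t <= 1 -> d p (g t) < r.
Proof.
  set (delta := fun x r => proj1_sig (constructive_indefinite_description _ (delta_ex d Hm Hl x r))).
  assert (Hd : dspec d delta).
  { intros x r0 Hr0. unfold delta. exact (proj2_sig (constructive_indefinite_description _ (delta_ex d Hm Hl x r0)) Hr0). }
  set (e := fun k => r/8 * (/2)^k).
  assert (e_pos : forall k, 0 < e k).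
  { intro k. unfold e. apply Rmult_lt_0_compat; [lra|]. apply pow_lt; lra. }
  assert (e_S : forall k, e (S k) = e k / 2).
  { intro k. unfold e. simpl. field. }
  assert (e_small : forall c, 0 < c -> exists N, e N < c).
  { intros c Hc. destruct (pow_lt_1_zero (/2) ltac:(rewrite Rabs_right; lra) (c / (r/8)) ltac:(apply Rdiv_lt_0_compat; lra)) as [N HN].
    exists N. specialize (HN N (le_n _)). pose proof (Rle_abs ((/2)^N)).
    unfold e. assert (H1 : (/2)^N < c / (r/8)) by lra.
    apply Rmult_lt_compat_l with (r := r/8) in H1; [|lra].
    replace (r/8 * (c/(r/8))) with c in H1 by (field; lra). exact H1. }
  set (step := fun k x y => proj1_sig (constructive_indefinite_description _ (step_ex d Hm delta Hd e e_pos k x y))).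
  assert (Hs : step_spec d e (valid_of d delta e) step).
  { intros k x y Hv. unfold step. exact (proj2_sig (constructive_indefinite_description _ (step_ex d Hm delta Hd e e_pos k x y)) Hv). }
  assert (valid_d : forall k x y, valid_of d delta e k x y -> d x y < e k).
  { intros k x y [H|H].
    - destruct (Hd x (e k) (e_pos k)) as [_ [H2 _]]. lra.
    - destruct (Hd y (e k) (e_pos k)) as [_ [H2 _]]. lra. }
  exists (delta p (e 0%nat)). split. apply (Hd p (e 0%nat) (e_pos 0%nat)).
  intros q Hq.
  destruct (limit_path d Hm Hcomp e e_pos e_S e_small (valid_of d delta e) step valid_d Hs p q)
    as [g [H1 [H2 [H3 H4]]]].
  { left; auto. }
  exists g. repeat split; auto. intros t Ht. specialize (H4 t Ht). unfold e in H4. simpl in H4. lra.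
Qed.

Theorem mainTheorem13 (X : Type) (d : X -> X -> R)
  (Hmetric : is_metric d) (Hcomplete : complete_metric d)
  (Haac : almost_arcwise_connected d)
  (Hlaac : loc_almost_arcwise_connected d) :
  arcwise_connected d /\ loc_arcwise_connected d.
Proof.
  split.
  - intros a b.
    destruct (LPC d Hmetric Hcomplete Hlaac a 1 ltac:(lra)) as [ea [Hea Ha]].
    destruct (LPC d Hmetric Hcomplete Hlaac b 1 ltac:(lra)) as [eb [Heb Hb]].
    destruct (Haac (ball d a ea) (ball d b eb)) as [h [Hh1 [_ [Hh3 Hh4]]]].
    + apply ball_open; auto.
    + exists a. unfold ball. rewrite (d_refl d Hmetric). auto.
    + apply ball_open; auto.
    + exists b. unfold ball. rewrite (d_refl d Hmetric). auto.
    + destruct (Ha (h 0) Hh3) as [ga [Ga1 [Ga2 [Ga3 _]]]].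
      destruct (Hb (h 1) Hh4) as [gb [Gb1 [Gb2 [Gb3 _]]]].
      exists (concat ga (concat h (rev gb))). split; [|split; [|split]].
      * apply concat_cont. auto. apply concat_cont. auto. apply rev_cont; auto.
        unfold rev. replace (1-0) with 1 by lra. auto.
        rewrite concat_0. auto.
      * intros; exact I.
      * rewrite concat_0. auto.
      * rewrite !concat_1. unfold rev. replace (1-1) with 0 by lra. auto.
  - intros x V [W [HWo [HWx HWV]]].
    destruct (HWo x HWx) as [r [Hr HrW]].
    destruct (LPC d Hmetric Hcomplete Hlaac x r Hr) as [eta [Heta Hx]].
    exists (ball d x (Rmin eta r)). split; [|split].
    + exists (ball d x (Rmin eta r)). split. apply ball_open; auto. split.
      unfold ball. rewrite (d_refl d Hmetric). apply Rmin_pos; auto.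
      intros z Hz; exact Hz.
    + intros z Hz. apply HWV. apply HrW. unfold ball in Hz. pose proof (Rmin_r eta r). lra.
    + intros a b Ha Hb. unfold ball in Ha, Hb.
      pose proof (Rmin_l eta r).
      destruct (Hx a ltac:(lra)) as [ga [Ga1 [Ga2 [Ga3 Ga4]]]].
      destruct (Hx b ltac:(lra)) as [gb [Gb1 [Gb2 [Gb3 Gb4]]]].
      exists (concat (rev ga) gb). split; [|split; [|split]].
      * apply concat_cont. apply rev_cont; auto. auto. unfold rev. replace (1-1) with 0 by lra. congruence.
      * apply concat_img.
        -- intros t Ht. unfold rev. apply HWV, HrW. apply Ga4. lra.
        -- intros t Ht. apply HWV, HrW. apply Gb4. lra.
      * rewrite concat_0. unfold rev. replace (1-0) with 1 by lra. auto.
      * rewrite concat_1. auto.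
Qed.
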